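(* Let $\Gamma\subseteq\Lambda^+$ be reflective, with $S\subseteq\mathbb Z\Gamma$, $E(\Gamma)$ part of a basis of $(\mathbb Z\Gamma)^*$, and $\mathbb Z\Gamma$ $W$-invariant. Let $\alpha\in S$. Then $a(\alpha)$ consists of exactly two elements $\delta_1,\delta_2$, both lying in $E(\Gamma)$, with $\alpha^\vee|_{\mathbb Z\Gamma}=\delta_1+\delta_2$; moreover, every $\delta\in E(\Gamma)$ with $\langle\delta,\alpha\rangle>0$ satisfies $\langle\delta,\alpha\rangle=1$.
   Context: $G$: complex connected reductive group with Borel $B$, maximal torus $T$, weight lattice $\Lambda$, dominant weights $\Lambda^+$, simple roots $S$, Weyl group $W$ (acting on $\Lambda$ and dually), coroots $\alpha^\vee\in\mathrm{Hom}(\Lambda,\mathbb Z)$. A finitely generated $\Gamma\subseteq\Lambda^+$ is normal if $\mathbb Z\Gamma\cap\mathbb Q_{\ge0}\Gamma=\Gamma$. $\Gamma$ is reflective if it is normal and (1) $\mathrm{rk}\,\mathbb Z\Gamma=\mathrm{rk}\,\Lambda$; (2) the set of hyperplanes spanned by the codimension-1 faces of the cone $\mathbb Q_{\ge0}\Gamma$ is $W$-stable; (3) every codimension-1 face of $\mathbb Q_{\ge0}\Gamma$ meets the open positive Weyl chamber. $\Gamma^\vee=\{v\in\mathrm{Hom}_{\mathbb Z}(\mathbb Z\Gamma,\mathbb Q):\langle v,\gamma\rangle\ge0\ \forall\gamma\in\Gamma\}$; $E(\Gamma)$ is the set of primitive elements of $(\mathbb Z\Gamma)^*$ spanning extremal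 rays of $\Gamma^\vee$. For $\alpha\in S\cap\mathbb Z\Gamma$, $a(\alpha)=\{\delta\in(\mathbb Z\Gamma)^*:\langle\delta,\alpha\rangle=1,\ \delta\in E(\Gamma)\text{ or }\alpha^\vee|_{\mathbb Z\Gamma}-\delta\in E(\Gamma)\}$. *)

(* Defs.v *)
(* Model of a complex connected reductive group G with
   Borel B and maximal torus T through its based root datum:
   Lambda = Z^n sitting inside Q^n (row vectors), the dual lattice
   Hom(Lambda,Z) = Z^n paired by the dot product, simple roots alpha i
   and simple coroots coalpha i (i : 'I_r). *)
From HB Require Import structures.
From mathcomp Require Import all_boot all_order all_algebra.
Set Implicit Arguments. Unset Strict Implicit. Unset Printing Implicit Defensive.
Import Order.TTheory GRing.Theory Num.Theory.
Local Open Scope ring_scope.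

Section RootDatum.
Variable n : nat.
Local Notation vec := 'rV[rat]_n.

Definition wpair (u x : vec) : rat := \sum_(j < n) u ord0 j * x ord0 j.

Definition is_int (q : rat) : Prop := exists z : int, q = z%:~R.
Definition integral (x : vec) : Prop := forall j, is_int (x ord0 j).

Variable r : nat.
Variables alpha coalpha : 'I_r -> vec.

(* simple reflection s_i, acting on row vectors by x |-> x *m refl_mx i,
   i.e. x |-> x - <coalpha i, x> alpha i *)
Definition refl_mx (i : 'I_r) : 'M[rat]_n := 1%:M - (coalpha i)^T *m alpha i.

Inductive weyl : 'M[rat]_n -> Prop :=
| weyl1 : weyl 1%:M
| weylS (i : 'I_r) (w : 'M[rat]_n) : weyl w -> weyl (refl_mx i *m w).

(* (alpha, coalpha) is the based root datum of a connected reductive group: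
   integral simple (co)roots, Cartan matrix a generalized Cartan matrix
   of finite type (finite Weyl group), simple roots and coroots linearly
   independent. *)
Definition based_root_datum : Prop :=
  (forall i, integral (alpha i) /\ integral (coalpha i)) /\
  (forall i, wpair (coalpha i) (alpha i) = 2) /\
  (forall i j, i != j -> wpair (coalpha i) (alpha j) <= 0) /\
  (forall i j, wpair (coalpha i) (alpha j) = 0 <-> wpair (coalpha j) (alpha i) = 0) /\
  row_free (\matrix_(i < r) alpha i) /\
  row_free (\matrix_(i < r) coalpha i) /\
  (exists ws : seq 'M[rat]_n, forall w, weyl w -> w \in ws).

Definition dominant (x : vec) : Prop :=
  integral x /\ forall i, 0 <= wpair (coalpha i) x.

Definition open_chamber (x : vec) : Prop := forall i, 0 < wpair (coalpha i) x.

(* Gamma = the monoid generated by g 0, ..., g (k-1) *)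
Variable k : nat.
Variable g : 'I_k -> vec.

Definition inGamma (x : vec) : Prop :=
  exists m : 'I_k -> nat, x = \sum_(j < k) (m j)%:R *: g j.
Definition inZG (x : vec) : Prop :=
  exists z : 'I_k -> int, x = \sum_(j < k) (z j)%:~R *: g j.
Definition inQG (x : vec) : Prop :=
  exists q : 'I_k -> rat, (forall j, 0 <= q j) /\ x = \sum_(j < k) q j *: g j.

Definition normal_monoid : Prop :=
  forall x, inZG x -> inQG x -> inGamma x.

Definition cone_face (F : vec -> Prop) : Prop :=
  exists u : vec, (forall x, inQG x -> 0 <= wpair u x) /\
    (forall x, F x <-> (inQG x /\ wpair u x = 0)).

Definition lspan (F : vec -> Prop) (x : vec) : Prop :=
  exists (m : nat) (c : 'I_m -> rat) (f : 'I_m -> vec),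
    (forall j, F (f j)) /\ x = \sum_(j < m) c j *: f j.

Definition has_dim (F : vec -> Prop) (d : nat) : Prop :=
  (exists M : 'M[rat]_(d, n), (forall j, F (row j M)) /\ \rank M = d) /\
  (forall M : 'M[rat]_(d.+1, n), (forall j, F (row j M)) -> (\rank M <= d)%N).

Definition facet (F : vec -> Prop) : Prop :=
  cone_face F /\ exists d, d.+1 = n /\ has_dim F d.

Definition reflective : Prop :=
  normal_monoid /\
  \rank (\matrix_(j < k) g j) = n /\
  (forall w, weyl w -> forall F, facet F ->
     exists F', facet F' /\
       forall x, lspan F' x <-> exists y, lspan F y /\ x = y *m w) /\
  (forall F, facet F -> exists x, F x /\ open_chamber x).

(* Since rk Z Gamma = n, Hom(Z Gamma, Q) is identified with Q^n via the
   pairing; (Z Gamma)^* = Hom(Z Gamma, Z) is then the following lattice. *)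
Definition inLdual (v : vec) : Prop := forall x, inZG x -> is_int (wpair v x).

Definition inGdual (v : vec) : Prop := forall x, inGamma x -> 0 <= wpair v x.

Definition extremal_ray_gen (v : vec) : Prop :=
  inGdual v /\ v != 0 /\
  forall a b, inGdual a -> inGdual b -> a + b = v ->
    exists c : rat, 0 <= c /\ a = c *: v.

Definition primitive_dual (v : vec) : Prop :=
  inLdual v /\ v != 0 /\
  forall (w : vec) (m : nat), inLdual w -> v = m%:R *: w -> m = 1%N.

Definition inEG (v : vec) : Prop := primitive_dual v /\ extremal_ray_gen v.

Definition E_part_of_basis : Prop :=
  exists B : 'M[rat]_n,
    (forall i, inLdual (row i B)) /\ row_free B /\
    (forall v, inLdual v -> exists c : 'I_n -> int,
        v = \sum_(i < n) (c i)%:~R *: row i B) /\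
    (forall v, inEG v -> exists i, v = row i B).

Definition ZG_W_invariant : Prop :=
  forall w, weyl w -> forall x, inZG x -> inZG (x *m w).

Definition in_a (i : 'I_r) (d : vec) : Prop :=
  inLdual d /\ wpair d (alpha i) = 1 /\ (inEG d \/ inEG (coalpha i - d)).

End RootDatum.

(* Main.v *)
Set Warnings "-notation-overridden -ambiguous-paths -notation-incompatible-prefix".
Require Import Defs.
From HB Require Import structures.
From mathcomp Require Import all_boot all_order all_algebra.
From mathcomp Require Import ring lra zify.
From Stdlib Require Import Classical.
Import Order.TTheory GRing.Theory Num.Theory.
Local Open Scope ring_scope.
Set Implicit Arguments. Unset Strict Implicit. Unset Printing Implicit Defensive.
Section Basic.
Variable n : nat.
Implicit Types u v x y : 'rV[rat]_n.

Lemma wpairE u x : wpair u x = (u *m x^T) 0 0.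
Proof. by rewrite /wpair !mxE; apply: eq_bigr => j _; rewrite !mxE. Qed.

Lemma wpairC u x : wpair u x = wpair x u.
Proof. by rewrite /wpair; apply: eq_bigr => j _; rewrite mulrC. Qed.

Lemma wpairDl u v x : wpair (u + v) x = wpair u x + wpair v x.
Proof. by rewrite /wpair -big_split; apply: eq_bigr => j _; rewrite mxE mulrDl. Qed.

Lemma wpairZl a u x : wpair (a *: u) x = a * wpair u x.
Proof. by rewrite /wpair mulr_sumr; apply: eq_bigr => j _; rewrite mxE mulrA. Qed.

Lemma wpairNl u x : wpair (- u) x = - wpair u x.
Proof. by rewrite -scaleN1r wpairZl mulN1r. Qed.

Lemma wpairBl u v x : wpair (u - v) x = wpair u x - wpair v x.
Proof. by rewrite wpairDl wpairNl. Qed.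

Lemma wpair0l x : wpair 0 x = 0.
Proof. by rewrite -(scale0r 0) wpairZl mul0r. Qed.

Lemma wpairDr u x y : wpair u (x + y) = wpair u x + wpair u y.
Proof. by rewrite !(wpairC u) wpairDl. Qed.
Lemma wpairZr a u x : wpair u (a *: x) = a * wpair u x.
Proof. by rewrite !(wpairC u) wpairZl. Qed.
Lemma wpairNr u x : wpair u (- x) = - wpair u x.
Proof. by rewrite !(wpairC u) wpairNl. Qed.
Lemma wpairBr u x y : wpair u (x - y) = wpair u x - wpair u y.
Proof. by rewrite !(wpairC u) wpairBl. Qed.
Lemma wpair0r u : wpair u 0 = 0.
Proof. by rewrite wpairC wpair0l. Qed.

Lemma wpair_sumr m u (f : 'I_m -> 'rV[rat]_n) :
  wpair u (\sum_(j < m) f j) = \sum_(j < m) wpair u (f j).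
Proof.
elim/big_rec2: _ => [|j a b _ <-]; first by rewrite wpair0r.
by rewrite wpairDr.
Qed.

Lemma sub_kerP d (M : 'M[rat]_(d, n)) y :
  reflect (forall j, wpair y (row j M) = 0) (y <= kermx M^T)%MS.
Proof.
apply: (iffP sub_kermxP) => [H j | H].
  have := congr1 (fun A : 'M[rat]_(1, d) => A 0 j) H; rewrite !mxE => <-.
  by rewrite /wpair; apply: eq_bigr => l _; rewrite !mxE.
apply/rowP => j; rewrite [RHS]mxE -(H j) mxE /wpair; apply: eq_bigr => l _.
by rewrite !mxE.
Qed.

Lemma rank_ker d (M : 'M[rat]_(d, n)) : \rank (kermx M^T) = (n - \rank M)%N.
Proof. by rewrite mxrank_ker mxrank_tr. Qed.

End Basic.
Lemma is_int_int (z : int) : is_int z%:~R. Proof. by exists z. Qed.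
Lemma is_int0 : is_int 0. Proof. by exists 0. Qed.
Lemma is_int1 : is_int 1. Proof. by exists 1. Qed.
Lemma is_intD a b : is_int a -> is_int b -> is_int (a + b).
Proof. by move=> [x ->] [y ->]; exists (x + y); rewrite rmorphD. Qed.
Lemma is_intN a : is_int a -> is_int (- a).
Proof. by move=> [x ->]; exists (- x); rewrite rmorphN. Qed.
Lemma is_intM a b : is_int a -> is_int b -> is_int (a * b).
Proof. by move=> [x ->] [y ->]; exists (x * y); rewrite rmorphM. Qed.
Lemma is_int_nat (m : nat) : is_int m%:R. Proof. by exists m; rewrite pmulrn. Qed.
Lemma is_int_sum m (f : 'I_m -> rat) : (forall j, is_int (f j)) -> is_int (\sum_(j < m) f j).
Proof. move=> H; elim/big_rec: _ => [|j a _ Ha]; [exact: is_int0 | exact: is_intD]. Qed.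

Section Cone.
Variables (n k : nat) (g : 'I_k -> 'rV[rat]_n).
Implicit Types u v x y : 'rV[rat]_n.

Lemma sum_delta (j : 'I_k) (F : 'I_k -> rat) :
  \sum_(l < k) (F l * (l == j)%:R) *: g l = F j *: g j.
Proof.
rewrite (bigD1 j) //= eqxx mulr1 big1 ?addr0 // => l /negbTE ->.
by rewrite mulr0 scale0r.
Qed.

Lemma inGamma_g j : inGamma g (g j).
Proof.
exists (fun l => nat_of_bool (l == j)); rewrite (bigD1 j) //= eqxx scale1r big1 ?addr0 //.
by move=> l /negbTE ->; rewrite scale0r.
Qed.

Lemma inQG_g j : inQG g (g j).
Proof.
exists (fun l => (l == j)%:R); split => [l|]; first by case: (l == j).
rewrite (bigD1 j) //= eqxx scale1r big1 ?addr0 //.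
by move=> l /negbTE ->; rewrite scale0r.
Qed.

Lemma inQG0 : inQG g 0.
Proof. by exists (fun _ => 0); split => [//|]; rewrite big1 // => j _; rewrite scale0r. Qed.

Lemma GdualP u : inGdual g u <-> forall j, 0 <= wpair u (g j).
Proof.
split=> [H j | H x [m ->]]; first exact/H/inGamma_g.
rewrite wpair_sumr; apply: sumr_ge0 => j _; rewrite wpairZr.
by apply: mulr_ge0 => //; rewrite ler0n.
Qed.

Lemma QG_ge0 u x : inGdual g u -> inQG g x -> 0 <= wpair u x.
Proof.
move=> /GdualP H [q [q0 ->]]; rewrite wpair_sumr; apply: sumr_ge0 => j _.
by rewrite wpairZr mulr_ge0.
Qed.

Lemma GdualD u v : inGdual g u -> inGdual g v -> inGdual g (u + v).
Proof. by move=> /GdualP H1 /GdualP H2; apply/GdualP => j; rewrite wpairDl addr_ge0. Qed.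

Lemma GdualZ c u : 0 <= c -> inGdual g u -> inGdual g (c *: u).
Proof. by move=> c0 /GdualP H; apply/GdualP => j; rewrite wpairZl mulr_ge0. Qed.

Hypothesis hrk : \rank (\matrix_(j < k) g j) = n.

Lemma FR v : (forall j, wpair v (g j) = 0) -> v = 0.
Proof.
move=> H.
have : (v <= kermx (\matrix_(j < k) g j)^T)%MS.
  by apply/sub_kerP => j; rewrite rowK.
have /eqP -> : kermx (\matrix_(j < k) g j)^T == 0.
  by rewrite -mxrank_eq0 rank_ker hrk subnn.
by rewrite submx0 => /eqP.
Qed.

Lemma pointed u : inGdual g u -> inGdual g (- u) -> u = 0.
Proof.
move=> /GdualP H1 /GdualP H2; apply: FR => j; apply/eqP; rewrite eq_le H1 andbT.
by have := H2 j; rewrite wpairNl oppr_ge0.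
Qed.

End Cone.
Lemma posmin m (P : 'I_m -> rat) : (forall j, 0 < P j) -> exists t, 0 < t /\ forall j, t <= P j.
Proof.
elim: m P => [|m IH] P HP; first by exists 1; split => // [[]].
have [t [t0 Ht]] := IH (fun j => P (lift ord0 j)) (fun j => HP _).
exists (Num.min t (P ord0)); split; first by rewrite lt_min t0 HP.
move=> j; case: (unliftP ord0 j) => [j'|] ->; rewrite ge_min ?Ht ?lexx ?orbT //.
Qed.

Lemma argmin_ex (I : finType) (P : pred I) (F : I -> rat) i0 :
  P i0 -> exists j0, P j0 /\ forall j, P j -> F j0 <= F j.
Proof.
move=> Pi0; case: (arg_minP F Pi0) => j0 Pj0 Hm.
by exists j0; split => // j /Hm.
Qed.

Section Ext.
Variables (n k : nat) (g : 'I_k -> 'rV[rat]_n).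
Implicit Types u v x y : 'rV[rat]_n.
Hypothesis hrk : \rank (\matrix_(j < k) g j) = n.

Lemma scale_sub_rank1 u v (K : 'M[rat]_n) :
  (u <= K)%MS -> u != 0 -> (\rank K <= 1)%N -> (v <= K)%MS -> exists c, v = c *: u.
Proof.
move=> uK u0 rK vK.
have Ku : (K <= u)%MS.
  case: (mxrank_leqif_sup uK) => _ <-.
  move: (mxrankS uK) rK; rewrite rank_rV u0 /= => h1 h2; apply/eqP; lia.
have /submxP [D ->] := submx_trans vK Ku.
by exists (D 0 0); rewrite {1}[D]mx11_scalar mul_scalar_mx.
Qed.

Lemma ext_of_ker d (M : 'M[rat]_(d, n)) u :
  inGdual g u -> u != 0 ->
  (forall j, inQG g (row j M) /\ wpair u (row j M) = 0) ->
  (\rank (kermx M^T) <= 1)%N -> extremal_ray_gen g u.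
Proof.
move=> Gu u0 HM rK; split; [done | split; first done].
move=> a b Ga Gb Eab.
have uK : (u <= kermx M^T)%MS by apply/sub_kerP => j; case: (HM j).
have aK : (a <= kermx M^T)%MS.
  apply/sub_kerP => j; case: (HM j) => Qj; rewrite -Eab wpairDl => H0.
  have := QG_ge0 Ga Qj; have := QG_ge0 Gb Qj; lra.
have [c Ec] := scale_sub_rank1 uK u0 rK aK.
exists c; split => //; rewrite leNgt; apply/negP => c0.
have Gnu : inGdual g (- u).
  have cn : c != 0 by rewrite lt_eqF.
  have -> : - u = (- c^-1) *: a by rewrite Ec scalerA mulNr mulVf // scaleN1r.
  by apply: GdualZ => //; rewrite oppr_ge0 invr_le0 ltW.
by move: u0; rewrite (pointed hrk Gu Gnu) eqxx.
Qed.

Definition Amx u : 'M[rat]_(k, n) :=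
  \matrix_(j < k) (if wpair u (g j) == 0 then g j else 0).

Lemma rowAmx u j : row j (Amx u) = if wpair u (g j) == 0 then g j else 0.
Proof. by rewrite rowK. Qed.

Lemma ker_of_ext u : extremal_ray_gen g u -> (\rank (kermx (Amx u)^T) <= 1)%N.
Proof.
move=> [Gu [u0 Hext]]; rewrite leqNgt; apply/negP => rK.
have nKu : ~~ (kermx (Amx u)^T <= u)%MS.
  apply/negP => /mxrankS; rewrite rank_rV; move: rK; case: (u != 0) => /=; lia.
have [i Hi] := row_subPn nKu.
set v := row i _ in Hi.
have vK : (v <= kermx (Amx u)^T)%MS by apply: row_sub.
have vt j : wpair u (g j) = 0 -> wpair v (g j) = 0.
  by move=> H; move/sub_kerP: vK => /(_ j); rewrite rowAmx H eqxx.
have [t [t0 Ht]] : exists t, 0 < t /\ forall j, t <= (if wpair u (g j) == 0 then 1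
   else wpair u (g j) / (1 + `|wpair v (g j)|)).
  apply: posmin => j; case: ifP => // /negbT nz; apply: divr_gt0; last by rewrite ltr_pwDl // normr_ge0.
  by rewrite lt_def nz; move/GdualP: Gu; apply.
have key j s : s = 1 \/ s = -1 -> 0 <= wpair u (g j) + s * t * wpair v (g j).
  move=> Hs; case: (eqVneq (wpair u (g j)) 0) => [z|nz].
    by rewrite z vt // mulr0 addr0.
  have up : 0 < wpair u (g j) by rewrite lt_def nz; move/GdualP: Gu; apply.
  have := Ht j; rewrite (negbTE nz) ler_pdivlMr; last by rewrite ltr_pwDl // normr_ge0.
  have h1 := ler_norm (wpair v (g j)); have h2 := ler_norm (- wpair v (g j)).
  rewrite normrN in h2; have h3 := normr_ge0 (wpair v (g j)).
  set V := wpair v (g j) in h1 h2 h3 *; set U := wpair u (g j) in up *; move=> Ht'.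
  case: Hs => -> ; nra.
have Ga : inGdual g ((1/2) *: (u + t *: v)).
  apply: GdualZ => //; apply/GdualP => j; rewrite wpairDl wpairZl.
  by have := key j 1 (or_introl erefl); rewrite mul1r.
have Gb : inGdual g ((1/2) *: (u - t *: v)).
  apply: GdualZ => //; apply/GdualP => j; rewrite wpairBl wpairZl.
  by have := key j (-1) (or_intror erefl); rewrite mulN1r mulNr.
have Eab : (1/2) *: (u + t *: v) + (1/2) *: (u - t *: v) = u.
  by apply/rowP => l; rewrite !mxE; field.
have [c [_ Ec]] := Hext _ _ Ga Gb Eab.
move: Hi; rewrite (_ : v = ((c - 1/2) * 2 / t) *: u) ?scalemx_sub ?submx_refl //.
apply/rowP => l; have := congr1 (fun A : 'rV[rat]_n => A 0 l) Ec; rewrite !mxE => E.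
apply: (mulfI (lt0r_neq0 t0)).
have -> : t * ((c - 1/2) * 2 / t * u 0 l) = (c - 1/2) * 2 * u 0 l.
  by field; exact: lt0r_neq0.
nra.
Qed.

End Ext.
Section Walk.
Variables (n k : nat) (g : 'I_k -> 'rV[rat]_n).
Implicit Types u v w x y : 'rV[rat]_n.
Hypothesis hrk : \rank (\matrix_(j < k) g j) = n.

Lemma Amx_rows u j : inQG g (row j (Amx g u)) /\ wpair u (row j (Amx g u)) = 0.
Proof.
rewrite rowAmx; case: eqP => [H|_]; first by split => //; apply: inQG_g.
by split; [apply: inQG0 | rewrite wpair0r].
Qed.

Lemma step u w a :
  inGdual g u -> (forall j, wpair u (g j) = 0 -> wpair w (g j) = 0) ->
  wpair w a = 0 -> forall j1, wpair w (g j1) < 0 ->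
  exists u', [/\ inGdual g u', wpair u' a = wpair u a &
    (#|[set j | wpair u' (g j) != 0%R]| < #|[set j | wpair u (g j) != 0%R]|)%N].
Proof.
move=> Gu wt wa j1 Hj1.
have [j0 [Hj0 Hmin]] := argmin_ex (fun j => wpair u (g j) / (- wpair w (g j)))
   (P := [pred j | wpair w (g j) < 0]) Hj1.
rewrite /= in Hj0 Hmin.
set t := wpair u (g j0) / (- wpair w (g j0)).
have Gu' := (GdualP _ _).1 Gu.
have t0 : 0 <= t by rewrite divr_ge0 // oppr_ge0 ltW.
exists (u + t *: w); split.
- apply/GdualP => j; rewrite wpairDl wpairZl.
  case: (ltP (wpair w (g j)) 0) => Hw; last by rewrite addr_ge0 // mulr_ge0.
  have := Hmin j Hw; rewrite -/t ler_pdivlMr; last by rewrite oppr_gt0.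
  nra.
- by rewrite wpairDl wpairZl wa mulr0 addr0.
- apply: proper_card; rewrite properE; apply/andP; split.
    apply/subsetP => j; rewrite !inE; apply: contra => /eqP H.
    by rewrite wpairDl wpairZl H (wt _ H) mulr0 addr0.
  apply/subsetPn; exists j0; rewrite !inE.
    by apply/eqP => H; move: Hj0; rewrite (wt _ H) ltxx.
  rewrite negbK wpairDl wpairZl /t; apply/eqP; field.
  by rewrite lt_eqF.
Qed.

Lemma walk a u : inGdual g u -> 0 < wpair u a ->
  exists u', extremal_ray_gen g u' /\ 0 < wpair u' a.
Proof.
have [N] := ubnP #|[set j | wpair u (g j) != 0]|.
elim: N u => // N IH u HN Gu pu.
have u0 : u != 0 by apply: contraTneq pu => ->; rewrite wpair0l ltxx.
set K := kermx (Amx g u)^T.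
have [rK|rK] := leqP (\rank K) 1.
  by exists u; split => //; apply: (ext_of_ker hrk (M := Amx g u)) => // j; apply: Amx_rows.
set K2 := (K :&: kermx a^T)%MS.
have rK2 : (0 < \rank K2)%N.
  have h1 := mxrank_sum_cap K (kermx a^T).
  have h2 := rank_leq_col (K + kermx a^T)%MS.
  have h3 := rank_ker a; have h4 := rank_leq_row a.
  rewrite -/K2 in h1; lia.
have [i Hi] : exists i, row i K2 != 0.
  have : ~~ (K2 <= (0 : 'M[rat]_n))%MS by rewrite submx0 -mxrank_eq0 -lt0n.
  by case/row_subPn => i; rewrite submx0; exists i.
set v := row i K2 in Hi.
have vK : (v <= K)%MS by apply: submx_trans (row_sub _ _) (capmxSl _ _).
have va : wpair v a = 0.
  have : (v <= kermx a^T)%MS by apply: submx_trans (row_sub _ _) (capmxSr _ _).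
  by move/sub_kerP => /(_ ord0); rewrite rowE [delta_mx _ _]mx11_scalar !mxE /= mul1mx.
have vt j : wpair u (g j) = 0 -> wpair v (g j) = 0.
  by move=> H; move/sub_kerP: vK => /(_ j); rewrite rowAmx H eqxx.
have [j Hj] : exists j, wpair v (g j) != 0.
  case: (pickP [pred j | wpair v (g j) != 0]) => [j Hj|H]; first by exists j.
  by move: Hi; rewrite (FR hrk (v := v)) ?eqxx // => j; apply/eqP; move: (H j) => /= /negbFE.
have [w [wt wa [j1 Hj1]]] : exists w, [/\ forall j, wpair u (g j) = 0 -> wpair w (g j) = 0,
    wpair w a = 0 & exists j1, wpair w (g j1) < 0].
  case: (ltP (wpair v (g j)) 0) => Hv.
    by exists v; split => //; exists j.
  exists (- v); split; first by move=> l /vt; rewrite wpairNl => ->; rewrite oppr0.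
    by rewrite wpairNl va oppr0.
  by exists j; rewrite wpairNl oppr_lt0 lt_def Hj.
have [u' [Gu' pu' cu']] := step Gu wt wa Hj1.
apply: (IH u') => //; last by rewrite pu'.
by apply: leq_trans cu' _; rewrite -ltnS.
Qed.

End Walk.
Lemma int_scale n (u : 'rV[rat]_n) : exists z : int, 0 < z /\ integral (z%:~R *: u).
Proof.
exists (\prod_(l < n) denq (u 0 l)); split.
  by apply: prodr_gt0 => l _; apply: denq_gt0.
move=> l; rewrite mxE (bigD1 l) //=.
exists (numq (u 0 l) * \prod_(m < n | m != l) denq (u 0 m)).
rewrite !rmorphM /= mulrAC; congr (_ * _).
have E := divq_num_den (u 0 l).
rewrite -[X in _ * X = _]E mulrCA mulfV ?mulr1 //.
by rewrite intr_eq0 gt_eqF // denq_gt0.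
Qed.
Section Lat.
Variables (n k : nat) (g : 'I_k -> 'rV[rat]_n).
Implicit Types u v w x y e : 'rV[rat]_n.
Hypothesis hrk : \rank (\matrix_(j < k) g j) = n.
Hypothesis gint : forall j, integral (g j).

Lemma inZG_g j : inZG g (g j).
Proof.
exists (fun l => (nat_of_bool (l == j))%:Z); rewrite (bigD1 j) //= eqxx scale1r big1 ?addr0 //.
by move=> l /negbTE ->; rewrite scale0r.
Qed.

Lemma Ldual_pair w j : inLdual g w -> is_int (wpair w (g j)).
Proof. by move=> H; apply: H; apply: inZG_g. Qed.

Lemma Ldual_int v : integral v -> inLdual g v.
Proof.
move=> vi x [z ->]; rewrite wpair_sumr; apply: is_int_sum => j.
rewrite wpairZr; apply: is_intM; first exact: is_int_int.
by apply: is_int_sum => l; apply: is_intM; [apply: vi | apply: gint].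
Qed.

Lemma LdualD u v : inLdual g u -> inLdual g v -> inLdual g (u + v).
Proof. by move=> Hu Hv x Hx; rewrite wpairDl; apply: is_intD; [apply: Hu | apply: Hv]. Qed.
Lemma LdualN u : inLdual g u -> inLdual g (- u).
Proof. by move=> Hu x Hx; rewrite wpairNl; apply: is_intN; apply: Hu. Qed.
Lemma LdualZ (z : int) u : inLdual g u -> inLdual g (z%:~R *: u).
Proof. by move=> Hu x Hx; rewrite wpairZl; apply: is_intM; [apply: is_int_int | apply: Hu]. Qed.

Lemma ext_scale c u : 0 < c -> extremal_ray_gen g u -> extremal_ray_gen g (c *: u).
Proof.
move=> c0 [Gu [u0 H]]; split; first by apply: GdualZ => //; apply: ltW.
split; first by rewrite scaler_eq0 negb_or u0 gt_eqF.
move=> a b Ga Gb Eab.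
have c0' : c != 0 by rewrite gt_eqF.
have Ga' : inGdual g (c^-1 *: a) by apply: GdualZ => //; rewrite invr_ge0 ltW.
have Gb' : inGdual g (c^-1 *: b) by apply: GdualZ => //; rewrite invr_ge0 ltW.
have E' : c^-1 *: a + c^-1 *: b = u by rewrite -scalerDr Eab scalerA mulVf // scale1r.
have [d [d0 Ed]] := H _ _ Ga' Gb' E'.
exists d; split => //.
by rewrite scalerA mulrC -scalerA -Ed scalerA mulfV // scale1r.
Qed.

End Lat.
Section Prim.
Variables (n k : nat) (g : 'I_k -> 'rV[rat]_n).
Implicit Types u v w x y e : 'rV[rat]_n.
Hypothesis hrk : \rank (\matrix_(j < k) g j) = n.
Hypothesis gint : forall j, integral (g j).

Lemma prim e : inLdual g e -> e != 0 ->
  exists (N : nat) w, (0 < N)%N /\ primitive_dual g w /\ e = N%:R *: w.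
Proof.
move=> Le e0.
have [j Hj] : exists j, wpair e (g j) != 0.
  case: (pickP [pred j | wpair e (g j) != 0]) => [j Hj|H]; first by exists j.
  by move: e0; rewrite (FR hrk (v := e)) ?eqxx // => j; apply/eqP; move: (H j) => /= /negbFE.
have [z Ez0] := Ldual_pair j Le.
have zn0 : z != 0 by apply: contraNneq Hj => z0; rewrite Ez0 z0.
have bound N w : inLdual g w -> e = N%:R *: w -> (N <= `|z|)%N.
  move=> Lw Ew; have [y Ey] := Ldual_pair j Lw.
  have hN : (N%:R : rat) = (N%:Z)%:~R by rewrite pmulrn.
  move: (Ez0); rewrite Ew wpairZl Ey hN -rmorphM => /intr_inj Ez.
  move: zn0; rewrite -Ez abszM /= mulf_eq0 negb_or => /andP [_ y0].
  by rewrite leq_pmulr // absz_gt0.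
suff H : forall m N w, (`|z| - N)%N = m -> (0 < N)%N -> inLdual g w -> e = N%:R *: w ->
  exists (N : nat) w, (0 < N)%N /\ primitive_dual g w /\ e = N%:R *: w.
  by apply: (H _ 1%N e) => //; rewrite scale1r.
elim/ltn_ind => m IH N w Em N0 Lw Ew.
have w0 : w != 0 by apply: contraNneq e0 => w0; rewrite Ew w0 scaler0.
case: (classic (primitive_dual g w)) => Pw; first by exists N, w.
have : ~ (forall (w' : 'rV[rat]_n) (m' : nat), inLdual g w' -> w = m'%:R *: w' -> m' = 1%N).
  by move=> H; apply: Pw; split => //.
move=> /not_all_ex_not [w' /not_all_ex_not [m' H]].
have [Lw' H2] := imply_to_and _ _ H.
have [Ew' m1] := imply_to_and _ _ H2.
have m0 : m' <> 0%N by move=> m00; move: w0; rewrite Ew' m00 scale0r eqxx.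
have Ee : e = (N * m')%:R *: w' by rewrite Ew Ew' scalerA natrM.
have b := bound _ _ Lw' Ee.
have NN : (N < N * m')%N by rewrite -{1}(muln1 N) ltn_pmul2l //; lia.
refine (IH (`|z| - N * m')%N _ (N * m')%N w' erefl _ Lw' Ee); lia.
Qed.

Lemma ext_prim u : extremal_ray_gen g u -> exists d, inEG g d /\ exists c, 0 < c /\ u = c *: d.
Proof.
move=> Eu; have [Gu [u0 _]] := Eu.
have [z [z0 zi]] := int_scale u.
have z0' : (z%:~R : rat) != 0 by rewrite intr_eq0 gt_eqF.
have e0 : z%:~R *: u != 0 by rewrite scaler_eq0 negb_or z0'.
have [N [w [N0 [Pw Ew]]]] := prim (Ldual_int gint zi) e0.
have N0' : (N%:R : rat) != 0 by rewrite pnatr_eq0 -lt0n.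
exists w; split; first split => //.
  have -> : w = (N%:R)^-1 * z%:~R *: u by rewrite -scalerA Ew scalerA mulVf // scale1r.
  apply: ext_scale => //; apply: mulr_gt0; first by rewrite invr_gt0 ltr0n.
  by rewrite ltr0z.
exists ((z%:~R)^-1 * N%:R); split.
  by apply: mulr_gt0; [rewrite invr_gt0 ltr0z | rewrite ltr0n].
by rewrite -scalerA -Ew scalerA mulVf // scale1r.
Qed.

End Prim.
Section Facet.
Variables (n k : nat) (g : 'I_k -> 'rV[rat]_n).
Implicit Types u v w x y d : 'rV[rat]_n.
Hypothesis hrk : \rank (\matrix_(j < k) g j) = n.

Definition Fd d := fun x => inQG g x /\ wpair d x = 0.

Lemma lspan_of (F : 'rV[rat]_n -> Prop) x : F x -> lspan F x.
Proof.
by move=> Fx; exists 1%N, (fun _ => 1), (fun _ => x); split => //; rewrite big_ord1 scale1r.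
Qed.

Lemma lspan_perp (F : 'rV[rat]_n -> Prop) u y :
  (forall x, F x -> wpair u x = 0) -> lspan F y -> wpair u y = 0.
Proof.
move=> H [m [c [f [Ff ->]]]]; rewrite wpair_sumr big1 // => j _.
by rewrite wpairZr H // mulr0.
Qed.

Lemma Gamma_QG x : inGamma g x -> inQG g x.
Proof. by move=> [m ->]; exists (fun j => (m j)%:R); split => // j; rewrite ler0n. Qed.

Lemma facet_of_ext d : extremal_ray_gen g d -> facet g (Fd d).
Proof.
move=> Ed; have [Gd [d0 _]] := Ed.
split.
  exists d; split; first by move=> x; apply: QG_ge0.
  by [].
set A := Amx g d.
have rK := ker_of_ext hrk Ed.
have dK : (d <= kermx A^T)%MS by apply/sub_kerP => j; case: (Amx_rows g d j).
have rK1 := mxrankS dK; rewrite rank_rV d0 /= in rK1.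
have rA := rank_ker A; have rAn := rank_leq_col A.
rewrite -/A in rK.
exists (\rank A); split; first lia.
split.
  exists (rowsub (maxrankfun A) A); split.
    by move=> j; rewrite row_rowsub; apply: Amx_rows.
  by apply/eqP; apply: maxrowsub_free.
move=> M HM.
have dM : (d <= kermx M^T)%MS by apply/sub_kerP => j; case: (HM j).
have := mxrankS dM; rewrite rank_rV d0 rank_ker /=; lia.
Qed.

End Facet.
Section Refl.
Variables (n r : nat) (alpha coalpha : 'I_r -> 'rV[rat]_n) (i : 'I_r).
Implicit Types u v w x y : 'rV[rat]_n.
Local Notation s := (refl_mx alpha coalpha i).

Lemma xs x : x *m s = x - wpair (coalpha i) x *: alpha i.
Proof.
rewrite /refl_mx mulmxBr mulmx1 mulmxA; congr (_ - _).
rewrite [x *m _]mx11_scalar mul_scalar_mx wpairC wpairE; by [].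
Qed.

Lemma wpair_s u x : wpair u (x *m s) = wpair (u - wpair u (alpha i) *: coalpha i) x.
Proof.
rewrite xs wpairBr wpairZr wpairBl wpairZl; congr (_ - _).
by rewrite mulrC wpairC.
Qed.

Hypothesis two : wpair (coalpha i) (alpha i) = 2.

Lemma s_invol x : x *m s *m s = x.
Proof.
rewrite !xs wpairBr wpairZr two; apply/rowP => l; rewrite !mxE.
ring.
Qed.

Lemma weyl_s : weyl alpha coalpha s.
Proof. by rewrite -[s]mulmx1; apply: weylS; apply: weyl1. Qed.

End Refl.
Lemma sum_deltaF n m (F : 'I_m -> 'rV[rat]_n) j (G : rat) :
  \sum_(l < m) (G * (l == j)%:R) *: F l = G *: F j.
Proof.
rewrite (bigD1 j) //= eqxx mulr1 big1 ?addr0 // => l /negbTE ->.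
by rewrite mulr0 scale0r.
Qed.

Lemma sum_rows2 n (B : 'M[rat]_n) p q a b :
  a *: row p B + b *: row q B = \sum_l (a * (l == p)%:R + b * (l == q)%:R) *: row l B.
Proof.
under eq_bigr do rewrite scalerDl.
by rewrite big_split /= !sum_deltaF.
Qed.

Lemma coord_eq n (B : 'M[rat]_n) (a b : 'I_n -> rat) : row_free B ->
  \sum_l a l *: row l B = \sum_l b l *: row l B -> forall l, a l = b l.
Proof.
move=> Bf E l.
have Ha (c : 'I_n -> rat) : \sum_l c l *: row l B = (\row_l c l) *m B.
  by rewrite mulmx_sum_row; apply: eq_bigr => j _; rewrite mxE.
move: E; rewrite !Ha => /(row_free_inj Bf) /rowP /(_ l).
by rewrite !mxE.
Qed.

Lemma int_unit1 (a b : int) : 0 < a -> a * b = 1 -> a = 1.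
Proof.
move=> a0 E; have := congr1 absz E; rewrite abszM => /eqP; rewrite muln_eq1.
by case/andP => /eqP h _; rewrite -(gtz0_abs a0) h.
Qed.

Section Main.
Variables (n r : nat) (alpha coalpha : 'I_r -> 'rV[rat]_n) (k : nat) (g : 'I_k -> 'rV[rat]_n).
Hypothesis Hbrd : based_root_datum alpha coalpha.
Hypothesis Hdom : forall j, dominant coalpha (g j).
Hypothesis Hrefl : reflective alpha coalpha g.
Hypothesis HS : forall i, inZG g (alpha i).
Hypothesis HE : E_part_of_basis g.
Variable i : 'I_r.
Implicit Types u v w x y d : 'rV[rat]_n.

Lemma hrk : \rank (\matrix_(j < k) g j) = n.
Proof. by case: Hrefl => _ []. Qed.
Lemma gint j : integral (g j).
Proof. by case: (Hdom j). Qed.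
Lemma two : wpair (coalpha i) (alpha i) = 2.
Proof. by case: Hbrd => _ [H _]; apply: H. Qed.
Lemma cL : inLdual g (coalpha i).
Proof. by apply: (Ldual_int gint); case: Hbrd => [H _]; case: (H i). Qed.
Lemma cG : inGdual g (coalpha i).
Proof. by apply/GdualP => j; case: (Hdom j) => _; apply. Qed.

Lemma chamber d : extremal_ray_gen g d ->
  exists x, [/\ inQG g x, wpair d x = 0 & 0 < wpair (coalpha i) x].
Proof.
move=> Ed; case: Hrefl => _ [_ [_ H]].
by have [x [[Qx dx] ox]] := H _ (facet_of_ext hrk Ed); exists x; split.
Qed.

Lemma not_par d m c : extremal_ray_gen g d -> 0 < m -> m *: coalpha i <> c *: d.
Proof.
move=> Ed m0 E; have [x [_ dx cx]] := chamber Ed.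
have := congr1 (fun v => wpair v x) E; rewrite /= !wpairZl dx mulr0.
by move/eqP; rewrite mulf_eq0 !gt_eqF.
Qed.

Lemma E_int d j : inEG g d -> is_int (wpair d (alpha j)).
Proof. by case=> [[Ld _] _]; apply: Ld; apply: HS. Qed.

Lemma mstep d : inEG g d -> 0 < wpair d (alpha i) ->
  [/\ wpair d (alpha i) = 1, inEG g (coalpha i - d) & coalpha i - d != d].
Proof.
move=> Ed0 mpos; have [[Ld [d0 _]] Ed] := Ed0.
set m := wpair d (alpha i) in mpos *.
have [x0 [Qx0 dx0 cx0]] := chamber Ed.
have Fac := facet_of_ext hrk Ed.
have [F' [Fac' HF']] :=
  (Hrefl.2.2.1) (refl_mx alpha coalpha i) (@weyl_s _ _ alpha coalpha i) (Fd g d) Fac.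
case: Fac' => [[u' [u'QG HFu']] [d' [Ed' [[M' [M'F rM']] _]]]].
set dl := d - m *: coalpha i.
have dlF x : F' x -> wpair dl x = 0.
  move=> F'x; have [y [Hy Exy]] := (HF' x).1 (lspan_of F'x).
  have : wpair d y = 0 := lspan_perp (fun z (Hz : Fd g d z) => Hz.2) Hy.
  have -> : y = x *m refl_mx alpha coalpha i by rewrite Exy s_invol // two.
  by rewrite wpair_s.
have dl0 : dl != 0.
  apply/negP => /eqP H; have Edm : 1 *: d = m *: coalpha i by rewrite scale1r; apply/eqP; rewrite -subr_eq0 -/dl H.
  by apply: (not_par Ed mpos); rewrite -Edm.
have u'G : inGdual g u' by move=> x Gx; apply: u'QG; apply: Gamma_QG.
have rK' : (\rank (kermx M'^T) <= 1)%N by rewrite rank_ker rM'; lia.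
have dlK : (dl <= kermx M'^T)%MS by apply/sub_kerP => j; apply: dlF.
have u'K : (u' <= kermx M'^T)%MS by apply/sub_kerP => j; case: ((HFu' _).1 (M'F j)).
have [c Ec] := scale_sub_rank1 hrk dlK dl0 rK' u'K.
have u'0 : u' != 0.
  apply/negP => /eqP u00; move/negP: dl0; apply; apply/eqP; apply: (FR hrk) => j.
  by apply: dlF; apply/HFu'; split; [apply: inQG_g | rewrite u00 wpair0l].
have Eu' : extremal_ray_gen g u'.
  by apply: (ext_of_ker hrk (M := M')) => // j; apply/HFu'.
have cneg : c < 0.
  have := QG_ge0 u'G Qx0; rewrite Ec wpairZl /dl wpairBl dx0 wpairZl sub0r.
  have : c != 0 by apply: contraNneq u'0 => c0; rewrite Ec c0 scale0r.
  move=> cn h; rewrite lt_neqAle cn /=.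
  have P0 : 0 < m * wpair (coalpha i) x0 by apply: mulr_gt0.
  move: h P0; set P := m * _; nra.
set eps := m *: coalpha i - d.
have Eeps : extremal_ray_gen g eps.
  have -> : eps = (- c)^-1 *: u'.
    by rewrite Ec scalerA invrN mulNr mulVf ?lt_eqF // scaleN1r /dl /eps opprB.
  by apply: ext_scale => //; rewrite invr_gt0 oppr_gt0.
have [d2 [Ed2 [t [t0 Eet]]]] := ext_prim hrk gint Eeps.
have [B [BL [Bf [Bspan BE]]]] := HE.
have [p Ep] := BE d Ed0; have [q Eq] := BE d2 Ed2.
have [cc Ecc] := Bspan _ cL.
have key : m *: coalpha i = d + t *: d2 by rewrite -Eet /eps addrC subrK.
have pq : p != q.
  apply/negP => /eqP pq; apply: (not_par Ed mpos (c := 1 + t)).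
  by rewrite key Eq -pq -Ep scalerDl scale1r.
have Ecoord := coord_eq Bf (a := fun l => m * (cc l)%:~R)
  (b := fun l => 1 * (l == p)%:R + t * (l == q)%:R).
have H1 : forall l, m * (cc l)%:~R = 1 * (l == p)%:R + t * (l == q)%:R.
  apply: Ecoord; rewrite -sum_rows2 scale1r -Ep -Eq -key Ecc scaler_sumr.
  by apply: eq_bigr => l _; rewrite scalerA.
have Hp := H1 p; rewrite eqxx (negbTE pq) mulr0 addr0 mulr1 in Hp.
have Hq := H1 q; rewrite eqxx eq_sym (negbTE pq) mulr0 add0r mulr1 in Hq.
have [mu Emu] := E_int i Ed0; rewrite -/m in Emu.
have m1 : m = 1.
  move: Hp mpos; rewrite Emu -rmorphM /= -[1]/(1%:~R) => /intr_inj E1.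
  rewrite ltr0z => mu0; rewrite (int_unit1 mu0 E1) //.
rewrite m1 mul1r in Hq.
have [be Ebe] := E_int i Ed2.
have t1 : t = 1.
  have : wpair eps (alpha i) = 1 by rewrite /eps wpairBl wpairZl two -/m m1; lra.
  rewrite Eet wpairZl Ebe -Hq -rmorphM /= -[1]/(1%:~R) => /intr_inj E1.
  move: t0; rewrite -Hq ltr0z => c0; rewrite (int_unit1 c0 E1) //.
have epsE : eps = coalpha i - d by rewrite /eps m1 scale1r.
split => //; first by rewrite -epsE Eet t1 scale1r.
apply/negP => /eqP E; apply: (not_par Ed (m := 1) (c := 2)) => //.
by rewrite scale1r -[2]/(1 + 1) scalerDl scale1r -{1}E subrK.
Qed.


Lemma two_sum d d' e1 e2 : inEG g d -> inEG g d' -> inEG g e1 -> inEG g e2 ->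
  d != d' -> d + d' = e1 + e2 -> d = e1 \/ d = e2.
Proof.
move=> Ed Ed' Ee1 Ee2 ne E.
have [B [BL [Bf [Bspan BE]]]] := HE.
have [p Ep] := BE d Ed; have [q Eq] := BE d' Ed'.
have [p1 Ep1] := BE e1 Ee1; have [q1 Eq1] := BE e2 Ee2.
have pq : p != q by apply: contraNneq ne => pq; rewrite Ep Eq pq.
have := coord_eq Bf (a := fun l => 1 * (l == p)%:R + 1 * (l == q)%:R)
  (b := fun l => 1 * (l == p1)%:R + 1 * (l == q1)%:R).
rewrite -!sum_rows2 !scale1r -Ep -Eq -Ep1 -Eq1 => /(_ E p).
rewrite eqxx (negbTE pq) !mul1r addr0.
case: (eqVneq p p1) => [h1|h1]; first by left; rewrite Ep Ep1 h1.
case: (eqVneq p q1) => [h2|h2]; first by right; rewrite Ep Eq1 h2.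
by rewrite /= addr0 => /eqP; rewrite oner_eq0.
Qed.

Theorem main_sec :
    (exists d1 d2 : 'rV[rat]_n,
        d1 != d2 /\
        (forall d, in_a alpha coalpha g i d <-> d = d1 \/ d = d2) /\
        inEG g d1 /\ inEG g d2 /\ coalpha i = d1 + d2) /\
    (forall d, inEG g d -> 0 < wpair d (alpha i) -> wpair d (alpha i) = 1).
Proof.
split; last by move=> d Ed p; case: (mstep Ed p).
have pc : 0 < wpair (coalpha i) (alpha i) by rewrite two.
have [u [Eu pu]] := walk hrk cG pc.
have [d1 [Ed1 [c [c0 Ec]]]] := ext_prim hrk gint Eu.
have p1 : 0 < wpair d1 (alpha i) by move: pu; rewrite Ec wpairZl pmulr_rgt0.
have [m1 Ed2 ne] := mstep Ed1 p1.
have sumE x : x + (coalpha i - x) = coalpha i by rewrite addrC subrK.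
have pair2 : wpair (coalpha i - d1) (alpha i) = 1 by rewrite wpairBl two m1; lra.
exists d1, (coalpha i - d1); split; first by rewrite eq_sym.
split; last by split; [done | split; [done | by rewrite sumE]].
move=> d; split.
- move=> [Ld [pd [Edd|Edd]]].
    have pd' : 0 < wpair d (alpha i) by rewrite pd ltr01.
    have [_ E2 ne2] := mstep Edd pd'.
    by apply: (two_sum Edd E2 Ed1 Ed2); [rewrite eq_sym | rewrite !sumE].
  have pe : 0 < wpair (coalpha i - d) (alpha i) by rewrite wpairBl two pd; lra.
  have [_ E2 ne2] := mstep Edd pe.
  rewrite subKr in E2 ne2.
  have ne3 : coalpha i - d != d by rewrite eq_sym.
  have Es : coalpha i - d + d = d1 + (coalpha i - d1) by rewrite sumE subrK.
  have [h|h] := two_sum Edd E2 Ed1 Ed2 ne3 Es.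
    by right; rewrite -h subKr.
  by left; rewrite -(subKr (coalpha i) d) h subKr.
- case=> ->.
    by have [[L _] _] := Ed1; split => //; split => //; left.
  by have [[L _] _] := Ed2; split => //; split => //; left.
Qed.

End Main.

Theorem mainTheorem16 (n r : nat) (alpha coalpha : 'I_r -> 'rV[rat]_n)
    (k : nat) (g : 'I_k -> 'rV[rat]_n) :
  based_root_datum alpha coalpha ->
  (forall j, dominant coalpha (g j)) ->
  reflective alpha coalpha g ->
  (forall i, inZG g (alpha i)) ->
  E_part_of_basis g ->
  ZG_W_invariant alpha coalpha g ->
  forall i : 'I_r,
    (exists d1 d2 : 'rV[rat]_n,
        d1 != d2 /\
        (forall d, in_a alpha coalpha g i d <-> d = d1 \/ d = d2) /\
        inEG g d1 /\ inEG g d2 /\ coalpha i = d1 + d2) /\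
    (forall d, inEG g d -> 0 < wpair d (alpha i) -> wpair d (alpha i) = 1).
Proof.
move=> Hb Hd Hr HS HE _ i.
exact: (main_sec Hb Hd Hr HS HE i).
Qed.
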